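(* Let $X$ be a Hausdorff topological space and $\mu:X^k\to X$ a continuous $k$-mean whose barycentric operator $\beta$ is power convergent. Define $\tilde\mu:X^{k+1}\to X$ by $\tilde\mu(\mathbf{x})=x^*$ where $\lim_n\beta^n(\mathbf{x})=(x^*,\ldots,x^* )$. Then: (i) $\tilde\mu$ is a $(k+1)$-mean on $X$ that is a $\beta$-invariant extension of $\mu$; (ii) any continuous $(k+1)$-mean on $X$ that is a $\beta$-invariant extension of $\mu$ equals $\tilde\mu$; (iii) if $\mu$ is symmetric, so is $\tilde\mu$.
   Context: A $k$-mean on $X$ is a map $\mu:X^k\to X$ with $\mu(x,\ldots,x)=x$; it is symmetric if it is invariant under permutations of its arguments. The barycentric operator $\beta=\beta_\mu:X^{k+1}\to X^{k+1}$ is $\beta(\mathbf{x})=(\mu(\pi_{\neq1}\mathbf{x}),\ldots,\mu(\pi_{\neq k+1}\mathbf{x}))$ where $\pi_{\neq j}(x_1,\ldots,x_{k+1})=(x_1,\ldots,x_{j-1},x_{j+1},\ldots,x_{k+1})$. $\beta$ is power convergent if for each $\mathbf{x}\in X^{k+1}$, $\lim_n\beta^n(\mathbf{x})=(x^*,\ldots,x^* )$ for some $x^*\in X$. A $(k+1)$-mean $\nu$ is a $\beta$-invariant extension of $\mu$ if $\nu\circ\beta_\mu=\nu$. *)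

(* Defs.v *)
From HB Require Import structures.
From mathcomp Require Import all_boot all_order fingroup perm.
From mathcomp Require Import boolp classical_sets topology.
Set Implicit Arguments. Unset Strict Implicit. Unset Printing Implicit Defensive.
Local Open Scope classical_set_scope.

(* X^k is rendered as {ptws 'I_k -> X}: functions 'I_k -> X with the
   product (pointwise) topology. *)
Notation tup X k := {ptws 'I_k -> X}.

Definition cst_tup (X : Type) (k : nat) (x : X) : tup X k := fun _ => x.
Arguments cst_tup {X} k x.

Definition is_mean (X : Type) (k : nat) (mu : tup X k -> X) : Prop :=
  forall x : X, mu (cst_tup k x) = x.

Definition is_symmetric (X : Type) (k : nat) (mu : tup X k -> X) : Prop :=
  forall (s : 'S_k) (x : tup X k), mu ((fun i => x (s i)) : tup X k) = mu x.

Definition pi_neq (X : Type) (k : nat) (j : 'I_k.+1) (x : tup X k.+1) : tup X k :=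
  fun i => x (lift j i).

Definition beta (X : Type) (k : nat) (mu : tup X k -> X)
  (x : tup X k.+1) : tup X k.+1 :=
  fun j => mu (pi_neq j x).

Definition power_convergent (X : topologicalType) (k : nat)
  (mu : tup X k -> X) : Prop :=
  forall x : tup X k.+1, exists xs : X,
    (fun n : nat => iter n (beta mu) x) @ \oo --> cst_tup k.+1 xs.

Definition beta_invariant_ext (X : Type) (k : nat) (mu : tup X k -> X)
  (nu : tup X k.+1 -> X) : Prop :=
  forall x, nu (beta mu x) = nu x.

(* Main.v *)
Require Import Defs.
From HB Require Import structures.
From mathcomp Require Import all_boot all_order fingroup perm.
From mathcomp Require Import boolp classical_sets topology.
Local Open Scope classical_set_scope.
Set Implicit Arguments. Unset Strict Implicit.

Lemma coordP (X : topologicalType) (k : nat) (u : nat -> {ptws 'I_k -> X}) c i :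
  u @ \oo --> (c : {ptws 'I_k -> X}) -> (fun n => u n i) @ \oo --> c i.
Proof. move=> H; exact: (cvg_comp _ _ H (@proj_continuous _ _ i c)). Qed.

Lemma shift1 (T : topologicalType) (u : nat -> T) (l : T) :
  u @ \oo --> l -> (fun n => u n.+1) @ \oo --> l.
Proof.
move=> H P /H [N _ HN]; exists N => // n /= Hn; apply: HN => /=.
exact: leqW.
Qed.

Section Perm.
Variables (k : nat) (s : 'S_k.+1) (j : 'I_k.+1).
Definition tf (i : 'I_k) : 'I_k := odflt i (unlift (s j) (s (lift j i))).
Lemma tfP i : lift (s j) (tf i) = s (lift j i).
Proof.
have hne : s j != s (lift j i) by rewrite (inj_eq (@perm_inj _ s)) neq_lift.
case: (unlift_some hne) => i' e1 e; by rewrite /tf e e1.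
Qed.
Lemma tf_inj : injective tf.
Proof.
move=> a b e; have : lift (s j) (tf a) = lift (s j) (tf b) by rewrite e.
by rewrite !tfP => /perm_inj /lift_inj.
Qed.
End Perm.

Lemma beta_perm (X : Type) k (mu : {ptws 'I_k -> X} -> X) (hs : is_symmetric mu)
  (s : 'S_k.+1) (x : {ptws 'I_k.+1 -> X}) :
  beta mu ((fun i => x (s i)) : {ptws 'I_k.+1 -> X}) = (fun j => beta mu x (s j)).
Proof.
apply: funext => j; rewrite /beta /pi_neq.
rewrite -[RHS](hs (perm (@tf_inj k s j))).
congr mu; apply: funext => i /=.
by rewrite permE tfP.
Qed.

Lemma uniqX (X : topologicalType) (hX : hausdorff_space X) (u : nat -> X) (a b : X) :
  u @ \oo --> a -> u @ \oo --> b -> a = b.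
Proof. move=> Ha Hb; exact: (cvg_unique hX Ha Hb). Qed.

Theorem proposition2p4 (X : topologicalType) (hX : hausdorff_space X) (k : nat)
  (mu : {ptws 'I_k -> X} -> X) (hmean : is_mean mu) (hcont : continuous mu)
  (hpc : power_convergent mu)
  (mut : {ptws 'I_k.+1 -> X} -> X)
  (hmut : forall x : {ptws 'I_k.+1 -> X},
     (fun n : nat => iter n (beta mu) x) @ \oo --> cst_tup k.+1 (mut x)) :
  (is_mean mut /\ beta_invariant_ext mu mut) /\
  (forall nu : {ptws 'I_k.+1 -> X} -> X,
     continuous nu -> is_mean nu -> beta_invariant_ext mu nu -> nu = mut) /\
  (is_symmetric mu -> is_symmetric mut).
Proof.
have H0 := fun x => coordP (i:=ord0) (hmut x).
split; [split|split].
- move=> x; have := H0 (cst_tup k.+1 x).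
  have -> : (fun n => iter n (beta mu) (cst_tup k.+1 x) ord0) = fun _ => x.
    apply: funext => n; elim: n => [//|n IH] /=.
    have -> : iter n (beta mu) (cst_tup k.+1 x) = cst_tup k.+1 x.
      by elim: n {IH} => [//|n IHn] /=; rewrite IHn; apply: funext => j; exact: hmean.
    exact: hmean.
  move=> H; apply: (uniqX hX H); exact: cvg_cst.
- move=> x; apply: (uniqX hX (H0 (beta mu x))).
  have -> : (fun n => iter n (beta mu) (beta mu x) ord0) =
            (fun n => iter n.+1 (beta mu) x ord0).
    by apply: funext => n; rewrite iterSr.
  exact: (shift1 (H0 x)).
- move=> nu hnu hnum hinv; apply: funext => x.
  have Hc := cvg_comp _ _ (hmut x) (hnu (cst_tup k.+1 (mut x))).
  have -> : mut x = nu (cst_tup k.+1 (mut x)).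
    by rewrite hnum.
  apply: (uniqX hX _ Hc).
  have -> : (nu \o fun n => iter n (beta mu) x) = fun _ => nu x.
    apply: funext => n /=; elim: n => [//|n IH] /=; by rewrite hinv.
  exact: cvg_cst.
- move=> hs s x; apply: (uniqX hX (H0 _)).
  have -> : (fun n => iter n (beta mu) ((fun i => x (s i)) : {ptws 'I_k.+1 -> X}) ord0)
     = (fun n => iter n (beta mu) x (s ord0)).
    apply: funext => n.
    suff -> : iter n (beta mu) ((fun i => x (s i)) : {ptws 'I_k.+1 -> X})
        = (fun i => iter n (beta mu) x (s i)) by [].
    elim: n => [//|n IH] /=; rewrite IH; exact: beta_perm.
  exact: (coordP (i:=s ord0) (hmut x)).
Qed.
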